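(* Let $Q_{\max}>0$ and let $a:(0,\infty)\to(0,\infty)$ be a strictly increasing, differentiable function (the effective bandwidth) with differentiable inverse. For a rate $r$ in the range of $a$, let $\theta(r)=a^{-1}(r)$ and define the queue violation probability $\epsilon_q(r)=\exp\{-\theta(r)Q_{\max}\}$. Let the SIR be a random variable with a probability density $f$ that is strictly positive on $(0,\infty)$, and define the link failure probability $\epsilon_r(r)=\mathbb{P}[\log(1+\mathrm{SIR})<r]$. Define the total error $\epsilon(r)=\epsilon_q(r)+\epsilon_r(r)-\epsilon_q(r)\epsilon_r(r)$. Then the equation $\epsilon_q(r)=\epsilon_r(r)$ has at most one root. Moreover, given a target error $\epsilon'\in(0,1)$, if $r^\ast$ is a root of $\epsilon_q(r)=\epsilon_r(r)$ and $$\epsilon_r(r^\ast)\le 1-\sqrt{1-\epsilon'},$$ then the target QoS $(\epsilon',Q_{\max})$ can be met by rate selection, i.e. there exists a rate $r$ (namely $r=r^\ast$) with $\epsilon(r)\le\epsilon'$.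
   Context: This formalizes the paper's approximation model: the queue violation probability at service rate $r=a(\theta)$ with tolerable queue length $Q_{\max}$ is approximated by $e^{-\theta Q_{\max}}$, the channel fails to support rate $r$ when the Shannon rate $\log(1+\mathrm{SIR})$ is below $r$, and the total error is approximated by $1-(1-\epsilon_q)(1-\epsilon_r)$. *)

(* Defs.v *)
From HB Require Import structures.
From mathcomp Require Import all_boot all_order all_algebra.
From mathcomp Require Import all_classical all_reals all_analysis.
Set Implicit Arguments. Unset Strict Implicit. Unset Printing Implicit Defensive.
Import Order.TTheory GRing.Theory Num.Theory.
Local Open Scope classical_set_scope.
Local Open Scope ring_scope.

Definition in_range (R : realType) (a : R -> R) (r : R) : Prop :=
  exists t, 0 < t /\ a t = r.

Definition eps_q (R : realType) (ainv : R -> R) (Qmax r : R) : R :=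
  expR (- (ainv r * Qmax)).

Definition eps_r (R : realType) d (T : measurableType d)
  (P : probability T R) (X : {RV P >-> R}) (r : R) : R :=
  fine (P [set w | ln (1 + X w) < r]).

Definition eps_total (R : realType) (eq er : R) : R := eq + er - eq * er.

(* Main.v *)
Require Import Defs.
From HB Require Import structures.
From mathcomp Require Import all_boot all_order all_algebra.
From mathcomp Require Import all_classical all_reals all_analysis.
From mathcomp Require Import ring lra.
Import Order.TTheory GRing.Theory Num.Theory.
Local Open Scope classical_set_scope.
Local Open Scope ring_scope.

Theorem theorem3 (R : realType) (d : measure_display) (T : measurableType d)
  (P : probability T R) (X : {RV P >-> R}) (f : R -> R)
  (a ainv : R -> R) (Qmax : R) :
  0 < Qmax ->
  (* effective bandwidth a : (0,oo) -> (0,oo), strictly increasing, differentiable *)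
  (forall t, 0 < t -> 0 < a t) ->
  (forall s t, 0 < s -> s < t -> a s < a t) ->
  (forall t, 0 < t -> derivable a t 1) ->
  (* ainv is the inverse of a on its range, and is differentiable there *)
  (forall t, 0 < t -> ainv (a t) = t) ->
  (forall t, 0 < t -> derivable ainv (a t) 1) ->
  (* the SIR X is nonnegative and has density f, strictly positive on (0,oo) *)
  (forall w, 0 <= X w) ->
  measurable_fun setT f ->
  (forall x, 0 <= f x) ->
  (forall x, 0 < x -> 0 < f x) ->
  (forall A, measurable A ->
     P (X @^-1` A) = (\int[lebesgue_measure]_(x in A) (f x)%:E)%E) ->
  (* at most one root of eps_q = eps_r *)
  (forall r1 r2, in_range a r1 -> in_range a r2 ->
     eps_q ainv Qmax r1 = eps_r X r1 ->
     eps_q ainv Qmax r2 = eps_r X r2 -> r1 = r2) /\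
  (* sufficient condition for meeting the target QoS *)
  (forall eps' rstar, 0 < eps' < 1 -> in_range a rstar ->
     eps_q ainv Qmax rstar = eps_r X rstar ->
     eps_r X rstar <= 1 - Num.sqrt (1 - eps') ->
     exists r, in_range a r /\
       eps_total (eps_q ainv Qmax r) (eps_r X r) <= eps').
Proof.
Proof.
move=> Q0 apos amono _ ainvK _ Xge0 _ _ _ _.
have setE : forall r, [set w | ln (1 + X w) < r] = X @^-1` `]-oo, expR r - 1[.
  move=> r; apply/seteqP; split => w /=; rewrite in_itv /= ltrBrDl.
    by rewrite -(ltr_expR) lnK // posrE; apply: ltr_pwDl.
  by rewrite -(ltr_expR) lnK // posrE; apply: ltr_pwDl.
have mono_r : forall r1 r2, r1 <= r2 -> eps_r X r1 <= eps_r X r2.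
  move=> r1 r2 hr; rewrite /eps_r !setE.
  have m1 : measurable (X @^-1` `]-oo, expR r1 - 1[) by apply: measurable_funPTI.
  have m2 : measurable (X @^-1` `]-oo, expR r2 - 1[) by apply: measurable_funPTI.
  apply: fine_le; rewrite ?inE; try exact: fin_num_measure.
  apply: le_measure; rewrite ?inE //.
  move=> w /=; rewrite !in_itv /= => h; apply: (lt_le_trans h).
  by rewrite lerD2r ler_expR.
have mono_q : forall r1 r2, in_range a r1 -> in_range a r2 -> r1 < r2 ->
    eps_r X r1 <= eps_r X r2 -> eps_q ainv Qmax r2 < eps_q ainv Qmax r1.
  move=> r1 r2 [t1 [t10 <-]] [t2 [t20 <-]] hlt _.
  rewrite /eps_q !ainvK // ltr_expR ltrN2 ltr_pM2r //.
  case: (ltgtP t1 t2) => // h.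
    by move: (amono _ _ t20 h); rewrite ltNge (ltW hlt).
  by move: hlt; rewrite h ltxx.
split.
  move=> r1 r2 h1 h2 e1 e2.
  case: (ltgtP r1 r2) => // h.
    have := mono_q _ _ h1 h2 h (mono_r _ _ (ltW h)).
    by rewrite e1 e2 ltNge (mono_r _ _ (ltW h)).
  have := mono_q _ _ h2 h1 h (mono_r _ _ (ltW h)).
  by rewrite e1 e2 ltNge (mono_r _ _ (ltW h)).
move=> eps' rs /andP[e0 e1] hr heq hle.
exists rs; split => //.
rewrite /eps_total heq.
set e := eps_r X rs in hle *.
have s0 : 0 <= Num.sqrt (1 - eps') by apply: sqrtr_ge0.
have sq : Num.sqrt (1 - eps') ^+ 2 = 1 - eps' by rewrite sqr_sqrtr // subr_ge0 ltW.
have h1 : Num.sqrt (1 - eps') <= 1 - e by rewrite lerBrDl -lerBrDr.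
have : Num.sqrt (1 - eps') ^+ 2 <= (1 - e) ^+ 2.
  by rewrite ler_sqr // ?nnegrE // (le_trans s0 h1).
rewrite sq => h2.
move: h2; rewrite expr2 => h2; nra.
Qed.
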